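(* Let $(R,\mathfrak{m})$ be a one-dimensional Cohen–Macaulay local ring. If $I$ is a trace ideal of $R$, then its integral closure $\bar I$ is also a trace ideal.
   Context: For an $R$-module $N$, $\operatorname{tr}(N)$ is the image of $N\otimes_R\operatorname{Hom}_R(N,R)\to R$, $n\otimes\alpha\mapsto\alpha(n)$; an ideal $I$ is a trace ideal if $I=\operatorname{tr}(N)$ for some $R$-module $N$ (equivalently $\operatorname{tr}(I)=I$). $\bar I$ denotes the integral closure of the ideal $I$. *)

(* Defs.v *)
From Stdlib Require List.
From HB Require Import structures.
From mathcomp Require Import all_boot all_order all_algebra.
Set Implicit Arguments. Unset Strict Implicit. Unset Printing Implicit Defensive.
Import Order.TTheory GRing.Theory Num.Theory.
Local Open Scope ring_scope.

Section CommAlg.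
Variable R : comNzRingType.

Definition same_set (A B : R -> Prop) : Prop := forall x, A x <-> B x.
Definition subset (A B : R -> Prop) : Prop := forall x, A x -> B x.

Definition is_ideal (I : R -> Prop) : Prop :=
  [/\ I 0, (forall x y, I x -> I y -> I (x + y)) & (forall r x, I x -> I (r * x))].

Definition is_prime (P : R -> Prop) : Prop :=
  [/\ is_ideal P, ~ P 1 & forall x y, P (x * y) -> P x \/ P y].

Definition is_maximal (M : R -> Prop) : Prop :=
  [/\ is_ideal M, ~ M 1 &
      forall J, is_ideal J -> ~ J 1 -> subset M J -> same_set M J].

Definition ideal_gen (s : seq R) (x : R) : Prop :=
  exists c : nat -> R, x = \sum_(i < size s) c i * s`_i.

Definition noetherian : Prop :=
  forall I, is_ideal I -> exists s : seq R, same_set I (ideal_gen s).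

Definition local_with_max (m : R -> Prop) : Prop :=
  is_maximal m /\ forall M, is_maximal M -> same_set M m.

Definition prime_chain (n : nat) (P : nat -> R -> Prop) : Prop :=
  (forall i, (i <= n)%N -> is_prime (P i)) /\
  (forall i, (i < n)%N -> subset (P i) (P i.+1) /\ ~ subset (P i.+1) (P i)).

Definition krull_dim (d : nat) : Prop :=
  (exists P, prime_chain d P) /\ ~ (exists P, prime_chain d.+1 P).

Definition regular_seq (m : R -> Prop) (s : seq R) : Prop :=
  (forall i, (i < size s)%N -> m s`_i) /\
  (forall i, (i < size s)%N -> forall r,
      ideal_gen (take i s) (r * s`_i) -> ideal_gen (take i s) r).

Definition depth_ge (m : R -> Prop) (d : nat) : Prop :=
  exists s, size s = d /\ regular_seq m s.

(* (R, m) is a Noetherian Cohen-Macaulay local ring of Krull dimension d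
   (depth R = dim R; since depth <= dim always, depth >= d suffices). *)
Definition CM_local_ring (m : R -> Prop) (d : nat) : Prop :=
  [/\ noetherian, local_with_max m, krull_dim d & depth_ge m d].

Definition is_hom (N : lmodType R) (f : N -> R) : Prop :=
  forall (r : R) (x y : N), f (r *: x + y) = r * f x + f y.

(* tr(N): image of N (x) Hom_R(N,R) -> R, i.e. finite sums of alpha_i(n_i). *)
Definition trace (N : lmodType R) (x : R) : Prop :=
  exists s : seq (N * (N -> R)),
    (forall p, List.In p s -> is_hom p.2) /\ x = \sum_(p <- s) p.2 p.1.

Definition is_trace_ideal (I : R -> Prop) : Prop :=
  exists N : lmodType R, same_set I (trace N).

Definition ideal_mul (I J : R -> Prop) (x : R) : Prop :=
  exists s : seq (R * R),
    (forall p, List.In p s -> I p.1 /\ J p.2) /\ x = \sum_(p <- s) p.1 * p.2.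

Fixpoint ideal_pow (I : R -> Prop) (n : nat) : R -> Prop :=
  match n with
  | 0 => fun _ => True
  | n'.+1 => ideal_mul I (ideal_pow I n')
  end.

Definition int_closure (I : R -> Prop) (x : R) : Prop :=
  exists (n : nat) (a : nat -> R), (0 < n)%N /\
    (forall i, (1 <= i <= n)%N -> ideal_pow I i (a i)) /\
    x ^+ n + \sum_(1 <= i < n.+1) a i * x ^+ (n - i) = 0.

End CommAlg.

(* Main.v *)
Require Import Defs.
From HB Require Import structures.
From mathcomp Require Import all_boot all_order all_algebra all_fingroup.
From mathcomp Require Import zify ring.
From Stdlib Require Import ClassicalEpsilon.
Set Implicit Arguments. Unset Strict Implicit. Unset Printing Implicit Defensive.
Import GRing.Theory.
Local Open Scope ring_scope.

Lemma In_cat (T : Type) (p : T) (s t : seq T) :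
  List.In p (s ++ t) -> List.In p s \/ List.In p t.
Proof. elim: s => /= [|a s IH]; first by right. by case=> [->|/IH []]; auto. Qed.

Lemma In_map (T U : Type) (f : T -> U) (p : U) (s : seq T) :
  List.In p [seq f x | x <- s] -> exists q, f q = p /\ List.In q s.
Proof. elim: s => //= a s IH [<-|/IH [q [? ?]]]; eauto. Qed.

Section Gen.
Variable R : comNzRingType.
Implicit Types I J : R -> Prop.

Lemma idealN J x : is_ideal J -> J x -> J (- x).
Proof. case=> _ _ HM Hx; rewrite -mulN1r; exact: HM. Qed.

Lemma ideal_sum J (T : Type) (r : seq T) (P : pred T) (F : T -> R) :
  is_ideal J -> (forall i, P i -> J (F i)) -> J (\sum_(i <- r | P i) F i).
Proof. by case=> H0 HD _ HF; apply: big_ind. Qed.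

Lemma ideal_sum_in J (T : Type) (r : seq T) (F : T -> R) :
  is_ideal J -> (forall i, List.In i r -> J (F i)) -> J (\sum_(i <- r) F i).
Proof.
case=> H0 HD HM; elim: r => [|a r IH] HF; first by rewrite big_nil.
rewrite big_cons; apply: HD; first by apply: HF; left.
by apply: IH => i Hi; apply: HF; right.
Qed.

Lemma ideal_mul_ideal I J : is_ideal I -> is_ideal (ideal_mul I J).
Proof.
case=> I0 ID IM; split.
- by exists [::]; split => //; rewrite big_nil.
- move=> x y [s [Hs Ex]] [t [Ht Ey]]; subst x y; exists (s ++ t); split; last by rewrite big_cat.
  by move=> p /(@In_cat _ _ s t) [/Hs|/Ht].
- move=> r x [s [Hs Ex]]; subst x; exists [seq (r * p.1, p.2) | p <- s]; split.
  + move=> p Hp; have [q [Eq Hq]] := In_map Hp; subst p => /=; have [h1 h2] := Hs q Hq; split => //; exact: IM.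
  + by rewrite big_map mulr_sumr; apply: eq_bigr => p _ /=; rewrite mulrA.
Qed.

Lemma pow_ideal I k : is_ideal I -> is_ideal (ideal_pow I k).
Proof. by case: k => [|k] HI /=; [split | apply: ideal_mul_ideal]. Qed.

Lemma pow_mul I i j u v : is_ideal I ->
  ideal_pow I i u -> ideal_pow I j v -> ideal_pow I (i + j) (u * v).
Proof.
move=> HI; elim: i u => [|i IH] u /= Hu Hv.
  by rewrite add0n; case: (pow_ideal j HI) => _ _ HM; apply: HM.
case: Hu => s [Hs ->].
exists [seq (p.1, p.2 * v) | p <- s]; split.
  move=> p Hp; have [q [Eq Hq]] := In_map Hp; subst p => /=; have [h1 h2] := Hs q Hq; split => //; exact: IH.
by rewrite big_map mulr_suml; apply: eq_bigr => p _; rewrite mulrA.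
Qed.

Lemma pow_succ_sub I k x : is_ideal I -> ideal_pow I k.+1 x -> ideal_pow I k x.
Proof.
move=> HI [s [Hs ->]]; apply: ideal_sum_in; first exact: pow_ideal.
move=> p /Hs [_ h2]; case: (pow_ideal k HI) => _ _ HM; exact: HM.
Qed.

Lemma pow_le I a b x : is_ideal I -> (a <= b)%N -> ideal_pow I b x -> ideal_pow I a x.
Proof.
move=> HI /subnK <-; elim: (b - a)%N => [|k IH] //= H.
by apply: IH; apply: pow_succ_sub.
Qed.

Lemma pow1 I x : is_ideal I -> ideal_pow I 1 x <-> I x.
Proof.
move=> HI; split.
  case=> s [Hs ->]; apply: ideal_sum_in => // p /Hs [h1 _].
  by case: HI => _ _ HM; rewrite mulrC; apply: HM.
by move=> Hx; exists [:: (x, 1)]; split; [move=> p [<-|[]] | rewrite big_seq1 mulr1].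
Qed.

Lemma pow_pos I k x : is_ideal I -> (0 < k)%N -> ideal_pow I k x -> I x.
Proof. by move=> HI Hk Hx; apply/(pow1 _ HI); apply: pow_le Hx. Qed.

End Gen.


Lemma reidx (R : comNzRingType) d (F : nat -> R) :
  \sum_(1 <= i < d.+1) F (d - i)%N = \sum_(i < d) F i.
Proof.
rewrite big_add1 /= -(big_mkord xpredT) [RHS](big_nat_rev _ _ 0 d).
apply: eq_big_nat => i /andP [_ Hi]; congr F; lia.
Qed.

Section PolyG.
Variable R : comNzRingType.
Variable I : R -> Prop.
Hypothesis HI : is_ideal I.

Definition polyG (d : nat) (q : {poly R}) :=
  [/\ (size q <= d.+1)%N, q`_d = 1 & forall l, ideal_pow I (d - l) q`_l].

Lemma polyG_size d q : polyG d q -> size q = d.+1.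
Proof.
case=> Hs Hd _; apply/eqP; rewrite eqn_leq Hs /= ltnNge; apply/negP => Hle.
by move: Hd; rewrite nth_default // => /eqP; rewrite eq_sym oner_eq0.
Qed.

Lemma polyG_monic d q : polyG d q -> q \is monic.
Proof. by move=> H; rewrite monicE lead_coefE (polyG_size H) /=; case: H => _ -> _. Qed.

Lemma pow0 k : ideal_pow I k 0.
Proof. by case: (pow_ideal k HI). Qed.

Lemma polyG_mul d1 d2 q1 q2 : polyG d1 q1 -> polyG d2 q2 -> polyG (d1 + d2) (q1 * q2).
Proof.
move=> H1 H2; have S1 := polyG_size H1; have S2 := polyG_size H2.
have M2 := polyG_monic H2.
have nz1 : q1 != 0 by rewrite -size_poly_eq0 S1.
have Sz : size (q1 * q2) = (d1 + d2).+1 by rewrite size_Mmonic // S1 S2 addSn addnS.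
split.
- by rewrite Sz.
- have : q1 * q2 \is monic by rewrite monicMr //; exact: polyG_monic H1.
  by rewrite monicE lead_coefE Sz => /eqP.
- move=> l; rewrite coefM; apply: ideal_sum; first exact: pow_ideal.
  move=> [j Hj] _ /=; case: H1 => _ _ C1; case: H2 => _ _ C2.
  apply: (pow_le HI _ (pow_mul HI (C1 j) (C2 (l - j)%N))); lia.
Qed.

Lemma polyG_exp d q k : polyG d q -> polyG (d * k) (q ^+ k).
Proof.
move=> H; elim: k => [|k IH].
  rewrite muln0 expr0; split; first by rewrite size_poly1.
  - by rewrite coef1.
  - by move=> l; rewrite sub0n.
by rewrite exprS mulnS; apply: polyG_mul.
Qed.

Lemma polyG_horner d q x : polyG d q ->
  q.[x] = x ^+ d + \sum_(i < d) q`_i * x ^+ i.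
Proof.
move=> H; rewrite (horner_coef_wide x (_ : size q <= d.+1)%N); last by case: H.
by rewrite big_ord_recr /=; case: H => _ -> _; rewrite mul1r addrC.
Qed.

Lemma closure_of_polyG d q x : (0 < d)%N -> polyG d q -> q.[x] = 0 -> int_closure I x.
Proof.
move=> Hd H Hq; exists d, (fun i => q`_(d - i)); split => //; split.
  move=> i /andP [Hi1 Hi2]; case: H => _ _ C; have := C (d - i)%N.
  by rewrite subKn.
rewrite (polyG_horner x H) in Hq.
by rewrite (reidx d (fun i => q`_i * x ^+ i)).
Qed.

Lemma polyG_of_closure x : int_closure I x ->
  exists d q, [/\ (0 < d)%N, polyG d q & q.[x] = 0].
Proof.
case=> d [a [Hd [Ha Hx]]].
exists d, (\poly_(i < d.+1) (if i == d then 1 else a (d - i)%N)).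
have HG : polyG d (\poly_(i < d.+1) (if i == d then 1 else a (d - i)%N)).
  split; first exact: size_poly.
  - by rewrite coef_poly ltnSn eqxx.
  - move=> l; rewrite coef_poly; case: ltnP => Hl; last exact: pow0.
    case: eqP => [->|Hne]; first by rewrite subnn.
    apply: Ha; apply/andP; split; lia.
split => //; rewrite (polyG_horner x HG) -[RHS]Hx; congr (_ + _).
set q := \poly_(i < d.+1) _.
rewrite -(reidx d (fun i => q`_i * x ^+ i)).
apply: eq_big_nat => i /andP [Hi1 Hi2]; rewrite /q coef_poly.
have -> : (d - i < d.+1)%N by lia.
have -> : (d - i == d)%N = false by apply/eqP; lia.
by rewrite subKn //; lia.
Qed.

End PolyG.


Lemma choice_fun (A B : Type) (P : A -> B -> Prop) :
  (forall a, exists b, P a b) -> exists f, forall a, P a (f a).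
Proof.
move=> H; exists (fun a => proj1_sig (constructive_indefinite_description _ (H a))).
by move=> a; exact: proj2_sig.
Qed.

Section Clos.
Variable R : comNzRingType.
Variable I : R -> Prop.
Hypothesis HI : is_ideal I.
Local Notation C := (int_closure I).

Lemma C0 : C 0.
Proof.
apply: (@closure_of_polyG _ _ 1 'X) => //; last by rewrite hornerX.
split; first by rewrite size_polyX.
- by rewrite coefX.
- move=> l; rewrite coefX; case: eqP => [->|_]; first by [].
  exact: (pow0 HI).
Qed.

Lemma C_I b : I b -> C b.
Proof.
move=> Hb; apply: (@closure_of_polyG _ _ 1 ('X - b%:P)) => //; last first.
  by rewrite hornerXsubC subrr.
split; first by rewrite size_XsubC.
- by rewrite coefB coefX coefC /= subr0.
- move=> [|[|l]]; rewrite coefB coefX coefC /=.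
  + by rewrite sub0r; apply/(pow1 _ HI); apply: idealN.
  + by [].
  + by [].
Qed.

Lemma CZ r x : C x -> C (r * x).
Proof.
case/(polyG_of_closure HI) => d [q [Hd HG Hq]].
have HG' : polyG I d (\poly_(i < d.+1) (q`_i * r ^+ (d - i))).
  split; first exact: size_poly.
  - by rewrite coef_poly ltnSn subnn expr0 mulr1; case: HG => _ -> _.
  - move=> l; rewrite coef_poly; case: ltnP => _; last exact: (pow0 HI).
    case: (pow_ideal (d - l) HI) => _ _ HM; rewrite mulrC; apply: HM.
    by case: HG => _ _; apply.
apply: (closure_of_polyG Hd HG'); rewrite horner_poly.
rewrite (horner_coef_wide x (_ : size q <= d.+1)%N) in Hq; last by case: HG.
transitivity (r ^+ d * \sum_(i < d.+1) q`_i * x ^+ i); last by rewrite Hq mulr0.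
rewrite mulr_sumr; apply: eq_bigr => [[i Hi]] _ /=.
rewrite exprMn mulrA -[q`_i * _ * _]mulrA -exprD subnK; last lia.
by rewrite mulrCA mulrA.
Qed.

Lemma Csum (T : Type) (s : seq T) (F : T -> R) :
  (forall x y, C x -> C y -> C (x + y)) ->
  (forall i, List.In i s -> C (F i)) -> C (\sum_(i <- s) F i).
Proof.
move=> HD; elim: s => [|a s IH] HF; first by rewrite big_nil; exact: C0.
rewrite big_cons; apply: HD; first by apply: HF; left.
by apply: IH => i Hi; apply: HF; right.
Qed.

Variable psi : R -> R.
Hypothesis H1 : forall r x, C x -> psi (r * x) = r * psi x.
Hypothesis H3 : forall b, I b -> I (psi b).

Lemma comm_psi b c : C b -> C c -> b * psi c = c * psi b.
Proof. by move=> Hb Hc; rewrite -H1 // -H1 // mulrC. Qed.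

Lemma tw_list k (s : seq (R * R)) :
  (forall a, ideal_pow I k a -> exists a', ideal_pow I k a' /\
     forall b, I b -> b ^+ k * a' = psi b ^+ k * a) ->
  (forall p, List.In p s -> I p.1 /\ ideal_pow I k p.2) ->
  exists a', ideal_pow I k.+1 a' /\ forall b, I b ->
     b ^+ k.+1 * a' = psi b ^+ k.+1 * \sum_(p <- s) p.1 * p.2.
Proof.
move=> IHk; elim: s => [|p s IH] Hs.
  by exists 0; split; [exact: (pow0 HI) | move=> b _; rewrite big_nil !mulr0].
have [h1 h2] := Hs p (or_introl erefl).
have [r [Hr Er]] : exists r, ideal_pow I k.+1 r /\ forall b, I b ->
     b ^+ k.+1 * r = psi b ^+ k.+1 * \sum_(p <- s) p.1 * p.2.
  by apply: IH => q Hq; apply: Hs; right.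
have [p2' [Hp2' Ep2']] := IHk _ h2.
exists (psi p.1 * p2' + r); split.
  case: (pow_ideal k.+1 HI) => _ HD _; apply: HD => //.
  by apply: (pow_mul HI (i:=1)) => //; apply/(pow1 _ HI); apply: H3.
move=> b Hb; rewrite big_cons mulrDr Er // mulrDr; congr (_ + _).
have e1 : b * psi p.1 = p.1 * psi b by apply: comm_psi; apply: C_I.
transitivity ((b * psi p.1) * (b ^+ k * p2')); first by rewrite exprS; ring.
by rewrite e1 Ep2' // exprS; ring.
Qed.

Lemma tw k a : ideal_pow I k a -> exists a', ideal_pow I k a' /\
     forall b, I b -> b ^+ k * a' = psi b ^+ k * a.
Proof.
elim: k a => [|k IH] a Ha.
  by exists a; split => // b _; rewrite !expr0.
case: Ha => s [Hs ->]; exact: tw_list.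
Qed.

Lemma twisted u : C u -> C (psi u).
Proof.
case/(polyG_of_closure HI) => d [q [Hd HG Hq]].
set w := psi u.
have Cu : C u by apply: (closure_of_polyG Hd HG Hq).
case: HI => I0 ID IM.
have Iud : I (u ^+ d).
  move: Hq; rewrite (polyG_horner u HG) => /eqP; rewrite addr_eq0 => /eqP ->.
  apply: idealN => //; apply: ideal_sum => // [[i Hi]] _ /=.
  rewrite mulrC; apply: IM; apply: (pow_pos HI _ (pow_le HI (leqnn _) _)); last first.
    by case: HG => _ _; apply.
  lia.
have Iwk : forall k, (k <= d)%N -> I (u ^+ (d - k) * w ^+ k).
  elim=> [|k IHk] Hk; first by rewrite subn0 expr0 mulr1.
  have -> : u ^+ (d - k.+1) * w ^+ k.+1 = psi (u ^+ (d - k) * w ^+ k).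
    have Edk : (d - k = (d - k.+1).+1)%N by lia.
    have -> : u ^+ (d - k) * w ^+ k = (u ^+ (d - k.+1) * w ^+ k) * u.
      by rewrite Edk exprS; ring.
    by rewrite H1 // exprS /w; ring.
  by apply: H3; apply: IHk; lia.
have Iwd : I (w ^+ d) by have := Iwk d (leqnn d); rewrite subnn expr0 mul1r.
have Hql : forall l, ideal_pow I (d - l) q`_l by case: HG.
have [c Hc] := @choice_fun nat R (fun l (a' : R) => ideal_pow I (d - l) a' /\
     forall b, I b -> b ^+ (d - l) * a' = psi b ^+ (d - l) * q`_l)
  (fun l => tw (Hql l)).
set q' := \poly_(l < d.+1) c l.
have HG' : polyG I d q'.
  split; first exact: size_poly.
  - rewrite coef_poly ltnSn; have [_ E] := Hc d; have := E 0 I0.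
    by rewrite subnn !expr0 !mul1r; case: HG => _ -> _.
  - move=> l; rewrite coef_poly; case: ltnP => _; last exact: (pow0 HI).
    by case: (Hc l).
set E := q'.[w].
have IE : I E.
  rewrite /E (polyG_horner w HG'); apply: ID => //.
  apply: ideal_sum => // [[i Hi]] _ /=; rewrite mulrC; apply: IM.
  apply: (pow_pos HI _ (pow_le HI (leqnn _) _)); last by case: HG' => _ _; apply.
  lia.
have kill : forall b, I b -> b ^+ d * E = 0.
  move=> b Hb; rewrite /E (horner_coef_wide w (_ : size q' <= d.+1)%N); last by case: HG'.
  rewrite (horner_coef_wide u (_ : size q <= d.+1)%N) in Hq; last by case: HG.
  transitivity (psi b ^+ d * \sum_(i < d.+1) q`_i * u ^+ i); last by rewrite Hq mulr0.
  rewrite !mulr_sumr; apply: eq_bigr => [[i Hi]] _ /=.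
  have Hid : (i <= d)%N by lia.
  have Ebd : forall z : R, z ^+ d = z ^+ (d - i) * z ^+ i by move=> z; rewrite -exprD subnK.
  rewrite /q' coef_poly Hi.
  transitivity ((b ^+ (d - i) * c i) * (b * w) ^+ i); first by rewrite Ebd exprMn; ring.
  case: (Hc i) => _ -> //.
  have e : b * w = u * psi b by apply: comm_psi => //; apply: C_I.
  by rewrite e Ebd exprMn; ring.
apply: (@closure_of_polyG _ _ (d * d.+1) (q' ^+ d.+1)).
- by rewrite muln_gt0 Hd.
- exact: polyG_exp.
- by rewrite horner_exp exprS -/E mulrC kill.
Qed.

End Clos.


Section Det.
Variable T : comNzRingType.
Variable P : T -> Prop.
Hypotheses (P0 : P 0) (P1 : P 1) (PD : forall x y, P x -> P y -> P (x + y))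
  (PN : forall x, P x -> P (- x)) (PM : forall x y, P x -> P y -> P (x * y)).
Lemma det_in n (M : 'M[T]_n) : (forall i j, P (M i j)) -> P (\det M).
Proof.
move=> HM; rewrite /determinant; apply: big_ind => // s _.
apply: PM; first by case: (odd_perm s); rewrite ?expr1 ?expr0 //; apply: PN.
by apply: big_ind => // i _.
Qed.

End Det.

Section Sub.
Variable T : comNzRingType.
Variable P : T -> Prop.
Hypotheses (P0 : P 0) (P1 : P 1) (PD : forall x y, P x -> P y -> P (x + y))
  (PN : forall x, P x -> P (- x)) (PM : forall x y, P x -> P y -> P (x * y)).

Definition PA (q : {poly T}) := forall l, P q`_l.

Lemma PA0 : PA 0. Proof. by move=> l; rewrite coef0. Qed.
Lemma PA1 : PA 1. Proof. by move=> l; rewrite coef1; case: (l == 0)%N. Qed.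
Lemma PAD p q : PA p -> PA q -> PA (p + q).
Proof. by move=> Hp Hq l; rewrite coefD; apply: PD. Qed.
Lemma PAN p : PA p -> PA (- p).
Proof. by move=> Hp l; rewrite coefN; apply: PN. Qed.
Lemma PAM p q : PA p -> PA q -> PA (p * q).
Proof. by move=> Hp Hq l; rewrite coefM; apply: big_ind => // i _; apply: PM. Qed.
Lemma PAX : PA 'X. Proof. by move=> l; rewrite coefX; case: (l == 1)%N. Qed.
Lemma PAC c : P c -> PA c%:P. Proof. by move=> Hc l; rewrite coefC; case: (l == 0)%N. Qed.

Definition aspan (s : seq T) (v : T) :=
  exists c : nat -> T, (forall i, P (c i)) /\ v = \sum_(i < size s) c i * s`_i.

Lemma span0 s : aspan s 0.
Proof. by exists (fun _ => 0); split => //; rewrite big1 // => i _; rewrite mul0r. Qed.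

Lemma spanD s u v : aspan s u -> aspan s v -> aspan s (u + v).
Proof.
case=> c [Hc ->] [d [Hd ->]]; exists (fun i => c i + d i); split; first by move=> i; apply: PD.
by rewrite -big_split; apply: eq_bigr => i _; rewrite mulrDl.
Qed.

Lemma spanZ s a v : P a -> aspan s v -> aspan s (a * v).
Proof.
move=> Ha [c [Hc ->]]; exists (fun i => a * c i); split; first by move=> i; apply: PM.
by rewrite mulr_sumr; apply: eq_bigr => i _; rewrite mulrA.
Qed.

Lemma span_mem s v : v \in s -> aspan s v.
Proof.
move=> Hv; exists (fun i => (i == index v s)%:R); split.
  by move=> i; case: (i == index v s).
rewrite (bigD1 (Ordinal (etrans (index_mem v s) Hv))) //= eqxx mul1r nth_index //.
rewrite big1 ?addr0 // => i; rewrite -val_eqE /= => /negbTE ->; by rewrite mul0r.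
Qed.

Lemma span_sum s (I : Type) (r : seq I) (F : I -> T) :
  (forall i, aspan s (F i)) -> aspan s (\sum_(i <- r) F i).
Proof. by move=> H; apply: big_ind => //; [exact: span0 | exact: spanD]. Qed.

Lemma DT (s : seq T) (z : T) : aspan s 1 ->
  (forall k, (k < size s)%N -> aspan s (z * s`_k)) ->
  exists p : {poly T}, [/\ p \is monic, size p = (size s).+1, PA p & p.[z] = 0].
Proof.
case: s => [|s0 s'] H1 Hk.
  by case: H1 => c [_]; rewrite big_ord0 => /eqP; rewrite oner_eq0.
set s := s0 :: s'.
have : forall k, exists c : nat -> T, (k < size s)%N ->
    (forall i, P (c i)) /\ z * s`_k = \sum_(i < size s) c i * s`_i.
  move=> k; case: (ltnP k (size s)) => h; first by have [c hc] := Hk k h; exists c.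
  by exists (fun _ => 0) => h'; exfalso; lia.
case/choice_fun => c Hc.
pose M : 'M[T]_((size s').+1) := \matrix_(k, i) c k i.
pose G : 'cV[T]_((size s').+1) := \col_k s`_k.
have HMG : M *m G = z *: G.
  apply/matrixP => k j; rewrite !mxE; have [_ ->] := Hc k (ltn_ord k).
  by apply: eq_bigr => i _; rewrite !mxE.
have Hh : forall q, horner_mx M q *m G = q.[z] *: G.
  elim/poly_ind => [|q a IH]; first by rewrite rmorph0 mul0mx horner0 scale0r.
  rewrite rmorphD rmorphM /= horner_mx_X horner_mx_C mulmxDl -mulmxA HMG.
  by rewrite -scalemxAr IH scalerA mul_scalar_mx hornerMXaddC scalerDl mulrC.
have Hz : forall k, (k < size s)%N -> (char_poly M).[z] * s`_k = 0.
  move=> k hk; have := congr1 (fun A : 'cV[T]_((size s').+1) => A (Ordinal hk) 0) (Hh (char_poly M)).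
  by rewrite Cayley_Hamilton mul0mx !mxE /= => <-.
exists (char_poly M); split.
- exact: char_poly_monic.
- by rewrite size_char_poly.
- apply: (det_in PA0 PA1 PAD PAN PAM) => i j; rewrite !mxE.
  apply: PAD; last by apply: PAN; apply: PAC; case: (Hc i (ltn_ord i)) => h _; apply: h.
  by case: (i == j); [rewrite mulr1n; exact: PAX | rewrite mulr0n; exact: PA0].
- case: H1 => d [_ Hd]; rewrite -[LHS]mulr1 Hd mulr_sumr big1 // => i _.
  by rewrite mulrCA Hz // mulr0.
Qed.
End Sub.


Section Add.
Variable R : comNzRingType.
Variable I : R -> Prop.
Hypothesis HI : is_ideal I.
Local Notation C := (int_closure I).

Definition Rees (p : {poly R}) := forall k, ideal_pow I k p`_k.

Lemma Rees0 : Rees 0. Proof. by move=> k; rewrite coef0; exact: (pow0 HI). Qed.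
Lemma Rees1 : Rees 1.
Proof. by move=> [|k]; rewrite coef1 //=; exact: (pow0 HI k.+1). Qed.
Lemma ReesD p q : Rees p -> Rees q -> Rees (p + q).
Proof. by move=> Hp Hq k; rewrite coefD; case: (pow_ideal k HI) => _ HD _; apply: HD. Qed.
Lemma ReesN p : Rees p -> Rees (- p).
Proof. by move=> Hp k; rewrite coefN; apply: idealN => //; exact: pow_ideal. Qed.
Lemma ReesM p q : Rees p -> Rees q -> Rees (p * q).
Proof.
move=> Hp Hq k; rewrite coefM; apply: ideal_sum; first exact: pow_ideal.
move=> [j Hj] _ /=; have := pow_mul HI (Hp j) (Hq (k - j)%N).
by rewrite subnKC // -ltnS.
Qed.
Lemma ReesCX c n : ideal_pow I n c -> Rees (c%:P * 'X^n).
Proof.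
move=> Hc k; rewrite coefCM coefXn; case: eqP => [->|_]; first by rewrite mulr1.
by rewrite mulr0; exact: (pow0 HI).
Qed.

Local Notation spanR := (aspan Rees).

Lemma Xn_eq x n q : polyG I n q -> q.[x] = 0 ->
  (x%:P * 'X) ^+ n = - \sum_(i < n) ((q`_i)%:P * 'X^(n - i)%N) * (x%:P * 'X) ^+ i.
Proof.
move=> HG Hq; apply/eqP; rewrite -addr_eq0; apply/eqP.
transitivity ((q.[x])%:P * 'X^n); last by rewrite Hq mul0r.
rewrite (polyG_horner x HG) polyCD mulrDl exprMn polyC_exp; congr (_ + _).
rewrite rmorph_sum mulr_suml; apply: eq_bigr => [[i Hi]] _ /=.
rewrite exprMn -polyC_exp polyCM.
have -> : 'X^n = 'X^(n - i)%N * 'X^i :> {poly R} by rewrite -exprD subnK //; lia.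
by ring.
Qed.

Lemma stepP (s : seq {poly R}) x n q (Q : {poly R}) : polyG I n q -> q.[x] = 0 ->
  (forall i, (i < n)%N -> spanR s ((x%:P * 'X) ^+ i * Q)) ->
  spanR s ((x%:P * 'X) ^+ n * Q).
Proof.
move=> HG Hq H; rewrite (Xn_eq HG Hq) mulNr mulr_suml -mulN1r.
apply: (spanZ ReesM); first exact: ReesN Rees1.
apply: (span_sum Rees0 ReesD) => [[i Hi]] /=.
rewrite (_ : (q`_i)%:P * 'X^(n - i) * (x%:P * 'X) ^+ i * Q = ((q`_i)%:P * 'X^(n - i)) * ((x%:P * 'X) ^+ i * Q)); last by rewrite !mulrA.
apply: (spanZ ReesM); last exact: H.
by apply: ReesCX; case: HG => _ _; apply.
Qed.

Lemma CD x y : C x -> C y -> C (x + y).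
Proof.
case/(polyG_of_closure HI) => n [qx [Hn HGx Hqx]].
case/(polyG_of_closure HI) => m [qy [Hm HGy Hqy]].
set X := x%:P * 'X; set Y := y%:P * 'X.
set s := [seq X ^+ j * Y ^+ k | j <- iota 0 n, k <- iota 0 m].
have mem : forall j k, (j < n)%N -> (k < m)%N -> spanR s (X ^+ j * Y ^+ k).
  move=> j k hj hk; apply: (span_mem Rees0 Rees1); apply: allpairs_f; rewrite mem_iota; lia.
have HX : forall j k, (j < n)%N -> (k < m)%N -> spanR s (X ^+ j.+1 * Y ^+ k).
  move=> j k hj hk; case: (ltnP j.+1 n) => h; first exact: mem.
  have -> : j.+1 = n by lia.
  by apply: (stepP HGx Hqx) => i hi; apply: mem.
have HY : forall j k, (j < n)%N -> (k < m)%N -> spanR s (X ^+ j * Y ^+ k.+1).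
  move=> j k hj hk; case: (ltnP k.+1 m) => h; first exact: mem.
  have -> : k.+1 = m by lia.
  by rewrite mulrC; apply: (stepP HGy Hqy) => i hi; rewrite mulrC; apply: mem.
have H1 : spanR s 1 by have := mem 0%N 0%N Hn Hm; rewrite !expr0 mulr1.
have Hk : forall k, (k < size s)%N -> spanR s ((X + Y) * s`_k).
  move=> k hk; have /allpairsP [[j l] [/= hj hl ->]] := mem_nth 0 hk.
  rewrite mem_iota in hj; rewrite mem_iota in hl.
  have -> : (X + Y) * (X ^+ j * Y ^+ l) = X ^+ j.+1 * Y ^+ l + X ^+ j * Y ^+ l.+1.
    by rewrite !exprS; ring.
  apply: (spanD ReesD); [apply: HX | apply: HY]; lia.
have [p [Mp Sp Rp Zp]] := DT Rees0 Rees1 ReesD ReesN ReesM H1 Hk.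
set r := size s in Sp.
have r0 : (0 < r)%N.
  have m0 : X ^+ 0 * Y ^+ 0 \in s by apply: allpairs_f; rewrite mem_iota; lia.
  by have := index_mem (X ^+ 0 * Y ^+ 0) s; rewrite m0 => /(leq_ltn_trans (leq0n _)).
pose g := \poly_(l < r.+1) (p`_l)`_(r - l).
have HG : polyG I r g.
  split; first exact: size_poly.
  - rewrite coef_poly ltnSn subnn.
    have : lead_coef p = 1 by apply/monicP.
    by rewrite lead_coefE Sp /= => ->; rewrite coef1.
  - move=> l; rewrite coef_poly; case: ltnP => _; [exact: Rp | exact: (pow0 HI)].
apply: (closure_of_polyG r0 HG).
rewrite horner_poly.
have := congr1 (fun P : {poly R} => P`_r) Zp.
rewrite coef0 (horner_coef_wide _ (_ : size p <= r.+1)%N) ?Sp // coef_sum => E.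
apply: etrans _ E; apply: eq_bigr => [[l Hl]] _ /=.
have -> : X + Y = (x + y)%:P * 'X by rewrite polyCD mulrDl.
rewrite exprMn -polyC_exp mulrA coefMXn ltnNge.
have -> : (l <= r)%N by lia.
by rewrite /= coefMC.
Qed.
End Add.


Section Hom.
Variable R : comNzRingType.
Variable N : lmodType R.

Lemma hom0 (f : N -> R) : is_hom f -> f 0 = 0.
Proof.
move=> Hf; have := Hf 1 0 0; rewrite scale1r addr0 mul1r => /eqP.
by rewrite -subr_eq subrr eq_sym => /eqP.
Qed.

Lemma homZ (f : N -> R) r x : is_hom f -> f (r *: x) = r * f x.
Proof. by move=> Hf; have := Hf r x 0; rewrite addr0 hom0 // addr0. Qed.

Lemma homD (f : N -> R) x y : is_hom f -> f (x + y) = f x + f y.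
Proof. by move=> Hf; have := Hf 1 x y; rewrite scale1r mul1r. Qed.

Lemma trace_ideal : is_ideal (trace N).
Proof.
split.
- by exists [::]; split => //; rewrite big_nil.
- move=> x y [s [Hs Ex]] [t [Ht Ey]]; subst x y; exists (s ++ t); split; last by rewrite big_cat.
  by move=> p /(@In_cat _ _ s t) [/Hs|/Ht].
- move=> r x [s [Hs Ex]]; subst x; exists [seq (r *: p.1, p.2) | p <- s]; split.
  + by move=> p Hp; have [q [Eq Hq]] := In_map Hp; subst p => /=; apply: Hs.
  + elim: s Hs => [|a s IH] Hs; first by rewrite !big_nil mulr0.
    rewrite /= !big_cons /= homZ; last by apply: Hs; left.
    by rewrite mulrDr IH // => p Hp; apply: Hs; right.
Qed.

Lemma in_trace (f : N -> R) n : is_hom f -> trace N (f n).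
Proof. by move=> Hf; exists [:: (n, f)]; split; [move=> p [<-|[]] | rewrite big_seq1]. Qed.
End Hom.


Section Mod.
Variable R : comNzRingType.
Variable I : R -> Prop.
Definition CP (x : R) : Prop := is_ideal I -> int_closure I x.
Definition Cb (x : R^o) : bool := if excluded_middle_informative (CP x) then true else false.
Lemma CbP x : Cb x <-> CP x.
Proof. by rewrite /Cb; case: excluded_middle_informative. Qed.
Lemma Cb_closed : subsemimod_closed (Cb : pred R^o).
Proof.
split; [split|].
- by apply/CbP => HI; exact: C0.
- move=> u v /CbP Hu /CbP Hv; apply/CbP => HI; exact (CD HI (Hu HI) (Hv HI)).
- move=> a v /CbP Hv; apply/CbP => HI; exact (CZ HI a (Hv HI)).
Qed.
Definition CT := {x : R^o | Cb x}.
HB.instance Definition _ := [isSub for (@proj1_sig R^o (fun x => is_true (Cb x)) : CT -> R^o)].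
HB.instance Definition _ := [Equality of CT by <:].
HB.instance Definition _ := [Choice of CT by <:].
HB.instance Definition _ := GRing.SubChoice_isSubLmodule.Build R R^o Cb CT Cb_closed.

Lemma CtoCb x : int_closure I x -> Cb x.
Proof. by move=> h; apply/CbP. Qed.

Variable f : CT -> R.
Hypothesis Hf : is_hom f.
Hypothesis HI : is_ideal I.
Local Notation C := (int_closure I).

Definition psi (r : R) : R := oapp f 0 (insub (r : R^o)).

Lemma psi_val v : psi (val v) = f v.
Proof. by rewrite /psi valK. Qed.

Lemma psiZ r x : C x -> psi (r * x) = r * psi x.
Proof.
move=> Hx; have hx := CtoCb Hx; have hrx := CtoCb (CZ HI r Hx).
rewrite /psi (insubT _ hx) (insubT _ hrx) /=.
have -> : (Sub (r * x) hrx : CT) = r *: (Sub x hx : CT) by apply: val_inj.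
exact: homZ.
Qed.

Lemma psiD x y : C x -> C y -> psi (x + y) = psi x + psi y.
Proof.
move=> Hx Hy; have hx := CtoCb Hx; have hy := CtoCb Hy; have hxy := CtoCb (CD HI Hx Hy).
rewrite /psi (insubT _ hx) (insubT _ hy) (insubT _ hxy) /=.
have -> : (Sub (x + y) hxy : CT) = (Sub x hx : CT) + (Sub y hy : CT) by apply: val_inj.
exact: homD.
Qed.

Lemma psi0 : psi 0 = 0.
Proof. by have := psiZ 0 (C0 HI); rewrite !mul0r. Qed.

Lemma psi_sum (T : Type) (t : seq T) (F : T -> R) :
  (forall q, List.In q t -> C (F q)) -> psi (\sum_(q <- t) F q) = \sum_(q <- t) psi (F q).
Proof.
elim: t => [|a t IH] Ht; first by rewrite !big_nil psi0.
rewrite !big_cons psiD; first by rewrite IH // => q Hq; apply: Ht; right.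
  by apply: Ht; left.
by apply: (Csum HI) => [u v|q Hq]; [exact: CD | apply: Ht; right].
Qed.

End Mod.

Theorem theorem6p2 (R : comNzRingType) (m : R -> Prop)
  (HR : CM_local_ring m 1) (I : R -> Prop) (HI : is_trace_ideal I) :
  is_trace_ideal (int_closure I).
Proof.
case: HI => N HN.
have Iid : is_ideal I.
  case: (trace_ideal N) => T0 TD TM; split.
  - exact/HN.
  - by move=> x y /HN hx /HN hy; apply/HN; exact: TD.
  - by move=> r x /HN hx; apply/HN; exact: TM.
have ItoC : forall b, I b -> int_closure I b by move=> b; exact: (C_I Iid).
have trC : forall (g : N -> R) n, is_hom g -> int_closure I (g n).
  by move=> g n Hg; apply: ItoC; apply/HN; exact: in_trace.
exists (CT I) => x; split.
- move=> Hx; have hx := CtoCb Hx.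
  exists [:: ((Sub x hx : CT I), (fun v : CT I => (val v : R)))]; split.
    by move=> p [<-|[]] //= r a b.
  by rewrite big_seq1.
- case=> s [Hs ->]; apply: (Csum Iid) => [u v|p Hp]; first exact: (CD Iid).
  have Hf := Hs p Hp.
  rewrite -(psi_val p.2 p.1); apply: (twisted Iid (psi := psi p.2)).
  + by move=> r y Hy; exact: psiZ.
  + move=> b /HN [t [Ht ->]]; apply/HN.
    rewrite psi_sum //; last by move=> q Hq; apply: trC; apply: Ht.
    apply: ideal_sum_in; first exact: trace_ideal.
    move=> q Hq; have Hq2 := Ht q Hq.
    apply: (in_trace (f := fun n => psi p.2 (q.2 n))) => r a c.
    have Ca := trC _ a Hq2; have Cc := trC _ c Hq2.
    by rewrite Hq2 psiD ?psiZ //; apply: (CZ Iid).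
  + by have /CbP H := valP p.1; exact: (H Iid).
Qed.
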